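(* Let $f\in P_k^n$ with $2\le ess(f)=n\le k$. Then (i) $\frac{n(n-1)}{2}\le cmr(f)\le \frac{n!(n-1)!}{2^{n-2}}$; (ii) $1\le mnr(f)\le \frac{n!(n-1)!}{2^{n-2}}$.
   Context: $Z_k=\{0,\dots,k-1\}$; $P_k^n$ is the set of all maps $Z_k^n\to Z_k$ in variables $x_1,\dots,x_n$. A variable $x_i$ is essential in $f$ if changing only the $i$-th argument can change the value of $f$; $Ess(f)$ is the set of essential variables, $ess(f)=|Ess(f)|$. For distinct essential $x_i,x_j$, $f_{i\leftarrow j}(a_1,\dots,a_n)=f(a_1,\dots,a_{i-1},a_j,a_{i+1},\dots,a_n)$; $f\rhd h$ means $h=f_{i\leftarrow j}$ for some such $i,j$; $Mnr(f)$ is the set of functions obtained from $f$ by one or more steps of $\rhd$. Two functions are equivalent ($\equiv$) if one is obtained from the other by permuting variables and introducing/deleting inessential variables; $mnr(f)$ is the number of $\equiv$-classes of distinct minors in $Mnr(f)$. The complexity $cmr$ is defined recursively: $cmr(f)=1$ if $ess(f)\le1$; $cmr(f)=2$ if $ess(f)=2$; and $cmr(f)=\sum_{j<i,\ x_i,x_j\in Ess(f)} cmr(f_{i\leftarrow j})$ if $ess(f)\ge3$. *)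

(* Defs.v *)
From mathcomp Require Import all_boot all_fingroup.
Set Implicit Arguments. Unset Strict Implicit. Unset Printing Implicit Defensive.

(* Z_k = 'I_k ; argument tuples (a_1,...,a_n) are finite functions 'I_n -> 'I_k;
   P_k^n is the (finite) type of maps from tuples to Z_k. *)
Definition tup (n k : nat) := {ffun 'I_n -> 'I_k}.
Definition PF (n k : nat) := {ffun tup n k -> 'I_k}.

Section Defs.
Variables n k : nat.

Definition upd (a : tup n k) (i : 'I_n) (c : 'I_k) : tup n k :=
  [ffun l => if l == i then c else a l].

Definition essential (f : PF n k) (i : 'I_n) : bool :=
  [exists a : tup n k, exists c : 'I_k, f a != f (upd a i c)].

Definition Ess (f : PF n k) : {set 'I_n} := [set i | essential f i].
Definition ess (f : PF n k) : nat := #|Ess f|.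

Definition subst_var (f : PF n k) (i j : 'I_n) : PF n k :=
  [ffun a : tup n k => f [ffun l => if l == i then a j else a l]].

Definition rhd : rel (PF n k) := fun f h =>
  [exists i : 'I_n, exists j : 'I_n,
     [&& i != j, i \in Ess f, j \in Ess f & h == subst_var f i j]].

Definition minorb (f h : PF n k) : bool :=
  [exists g : PF n k, rhd f g && connect rhd g h].

Definition Mnr (f : PF n k) : {set PF n k} := [set h | minorb f h].

Definition equivb (g h : PF n k) : bool :=
  [exists s : {perm 'I_n}, [forall a : tup n k, h a == g [ffun l => a (s l)]]].

Definition mnr (f : PF n k) : nat :=
  #|[set [set h' in Mnr f | equivb h h'] | h in Mnr f]|.

(* cmr, with fuel (ess strictly decreases along f |-> f_{i<-j}) *)
Fixpoint cmr_rec (m : nat) (f : PF n k) : nat :=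
  if ess f <= 1 then 1
  else if ess f == 2 then 2
  else match m with
       | 0 => 1
       | m'.+1 => \sum_(i in Ess f) \sum_(j in Ess f | j < i) cmr_rec m' (subst_var f i j)
       end.

Definition cmr (f : PF n k) : nat := cmr_rec n f.

End Defs.

(* Main.v *)
Require Import Defs.
From mathcomp Require Import all_boot all_fingroup zify.
Set Implicit Arguments. Unset Strict Implicit. Unset Printing Implicit Defensive.

Lemma pairs_count n (E : {set 'I_n}) :
  (\sum_(i in E) \sum_(j in E | j < i) 1) * 2 = #|E| * (#|E| - 1).
Proof.
set S := \sum_(i in E) _.
have eS : S = \sum_(i in E) \sum_(j in E) ((j < i) : nat).
  by apply: eq_bigr => i _; rewrite big_mkcondr.
have eS' : S = \sum_(i in E) \sum_(j in E) ((i < j) : nat).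
  by rewrite eS exchange_big.
have eD : \sum_(i in E) \sum_(j in E) ((i == j) : nat) = #|E|.
  have c : #|E| = \sum_(i in E) 1 by rewrite sum1_card.
  rewrite c; apply: eq_bigr => i iE.
  rewrite (bigD1 i) //= eqxx big1 //= => j /andP[_ ne].
  by rewrite eq_sym (negbTE ne).
have eT : \sum_(i in E) \sum_(j in E) (((j < i) : nat) + (i < j) + (i == j)) = #|E| * #|E|.
  have c : #|E| = \sum_(i in E) 1 by rewrite sum1_card.
  rewrite {1}c big_distrl /=; apply: eq_bigr => i _.
  rewrite mul1n c; apply: eq_bigr => j _.
  by rewrite -(inj_eq val_inj) /=; case: (ltngtP i j).
have : S + S + #|E| = #|E| * #|E|.
  rewrite -eT -{1}eD {1}eS {1}eS' -!big_split /=.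
  by apply: eq_bigr => i _; rewrite -!big_split.
case: #|E| => [|m]; first by lia.
rewrite subSS mulSn; lia.
Qed.

Fixpoint U (m : nat) : nat :=
  match m with
  | 0 | 1 => 1
  | 2 => 2
  | m'.+1 => 'C(m'.+1, 2) * U m'
  end.

Lemma U_mono : {homo U : i j / i <= j}.
Proof.
apply: homo_leq => [//|y x z|]; first exact: leq_trans.
case=> [|[|[|m]]] //=.
rewrite -[X in X <= _]mul1n leq_mul2r bin_gt0; lia.
Qed.

Lemma U_val m : 2 <= m -> U m * 2 ^ (m - 2) = m`! * (m - 1)`!.
Proof.
elim: m => [|m IH] // Hm.
case: m IH Hm => [|[|m]] IH Hm //.
rewrite [U _]/= -/(U m.+2) !subSS ?subn0.
have e2 : 'C(m.+3, 2) * 2 = m.+3 * m.+2 by rewrite -[2]/(2`!) bin_ffact ffactnS ffactn1.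
have := IH isT; rewrite !subSS !subn0 => IH'.
rewrite expnS.
have -> : 'C(m.+3, 2) * U m.+2 * (2 * 2 ^ m) = ('C(m.+3, 2) * 2) * (U m.+2 * 2 ^ m).
  by rewrite mulnACA mulnA.
rewrite e2 IH' !factS.
by rewrite mulnACA.
Qed.

Section Cmr.
Variables n k : nat.
Implicit Types (g : PF n k).

Lemma ess_subst g (i j : 'I_n) : i != j -> i \in Ess g -> j \in Ess g ->
  ess (subst_var g i j) < ess g.
Proof.
move=> ij iE jE.
have sub : Ess (subst_var g i j) \subset Ess g :\ i.
  apply/subsetP => l; rewrite !inE /essential.
  move=> /existsP[a /existsP[c]]; rewrite !ffunE => Hne.
  have li : l != i.
    apply: contraNneq Hne => ->; apply/eqP; congr (g _); apply/ffunP => l'.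
    rewrite !ffunE [j == i]eq_sym (negbTE ij); by case: ifP.
  rewrite li /=.
  case: (eqVneq l j) => [->|lj]; first by move: jE; rewrite inE.
  apply/existsP; exists [ffun l' => if l' == i then a j else a l'].
  apply/existsP; exists c; apply: contra Hne => /eqP ->.
  apply/eqP; congr (g _); apply/ffunP => l'; rewrite !ffunE.
  case: (eqVneq l' i) => [->|l'i] //.
  by rewrite ![_ == l]eq_sym (negbTE li) (negbTE lj).
rewrite /ess; apply: (leq_ltn_trans (subset_leq_card sub)).
by rewrite (cardsD1 i (Ess g)) iE.
Qed.

Lemma cmr_recS m g : 2 < ess g -> cmr_rec m.+1 g =
  \sum_(i in Ess g) \sum_(j in Ess g | j < i) cmr_rec m (subst_var g i j).
Proof.
move=> h; rewrite /= ifN; last by rewrite -ltnNge ltnW.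
rewrite ifN //; apply/negP => /eqP e; by move: h; rewrite e.
Qed.

Lemma cmr_rec_le m g : cmr_rec m g <= U (ess g).
Proof.
elim: m g => [|m IH] g.
  rewrite /=; case: ifP => [h1|/negbT h1]; first by case: (ess g) h1 => [|[|]].
  case: ifP => [/eqP->//|_].
  rewrite -ltnNge in h1; exact: (U_mono (ltnW h1)).
case: (leqP (ess g) 2) => h.
  rewrite /=; case: ifP => [h1|/negbT h1]; first by case: (ess g) h1 => [|[|]].
  case: ifP => [/eqP -> //|/negbT h2]; exfalso; move: h h1 h2.
  by case: (ess g) => [|[|[|]]].
rewrite cmr_recS //.
apply: (@leq_trans (\sum_(i in Ess g) \sum_(j in Ess g | j < i) U (ess g).-1)).
  apply: leq_sum => i iE; apply: leq_sum => j /andP[jE ji].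
  apply: leq_trans (IH _) _; apply: U_mono; rewrite -ltnS prednK; last by lia.
  by apply: ess_subst => //; rewrite neq_ltn ji orbT.
have eS : \sum_(i in Ess g) \sum_(j in Ess g | j < i) U (ess g).-1 =
   (\sum_(i in Ess g) \sum_(j in Ess g | j < i) 1) * U (ess g).-1.
  rewrite big_distrl; apply: eq_bigr => i _; rewrite big_distrl.
  by apply: eq_bigr => j _; rewrite /= mul1n.
have eC : \sum_(i in Ess g) \sum_(j in Ess g | j < i) 1 = 'C(ess g, 2).
  apply/eqP; rewrite -(eqn_pmul2r (_ : 0 < 2)) //; apply/eqP.
  rewrite pairs_count -/(ess g).
  by rewrite -[2]/(2`!) bin_ffact ffactnS ffactn1 subn1.
rewrite eS eC; move: h; rewrite /ess; case: #|Ess g| => [|[|[|x]]] //.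
Qed.

Lemma cmr_rec_ge1 m g : 1 <= cmr_rec m g.
Proof.
elim: m g => [|m IH] g.
  by rewrite /=; case: ifP => // _; case: ifP.
case: (leqP (ess g) 2) => h.
  rewrite /=; case: ifP => // /negbT h1; case: ifP => // /negbT h2.
  by exfalso; move: h h1 h2; case: (ess g) => [|[|[|]]].
rewrite cmr_recS //.
apply: (@leq_trans (\sum_(i in Ess g) \sum_(j in Ess g | j < i) 1)).
  have := pairs_count (Ess g); rewrite -/(ess g).
  case: (\sum_(i in Ess g) _) => //; lia.
by apply: leq_sum => i _; apply: leq_sum => j _; apply: IH.
Qed.

End Cmr.

Lemma ext_perm (T : finType) (g : T -> T) m : forall A : {set T}, #|A| = m ->
  {in A &, injective g} -> exists s : {perm T}, {in A, forall x, s x = g x}.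
Proof.
elim: m => [|m IH] A hA ginj.
  by exists 1%g => x; rewrite (card0_eq hA).
have : 0 < #|A| by rewrite hA.
move=> /card_gt0P[a aA].
have hA' : #|A :\ a| = m by move: hA; rewrite (cardsD1 a A) aA add1n => -[].
have ginj' : {in A :\ a &, injective g}.
  by move=> x y /setD1P[_ xA] /setD1P[_ yA]; apply: ginj.
have [s' Hs'] := IH _ hA' ginj'.
exists (s' * tperm (s' a) (g a))%g => x xA; rewrite permM.
case: (eqVneq x a) => [->|xa]; first by rewrite tpermL.
have xA' : x \in A :\ a by rewrite !inE xa.
rewrite (Hs' x xA') tpermD //.
  by apply: contra_neq xa => e; apply: (@perm_inj _ s'); rewrite (Hs' x xA').
by apply: contra_neq xa => e; apply: ginj.
Qed.

Section Mnr.
Variables n k : nat.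
Implicit Types (g h : PF n k) (r : {ffun 'I_n -> 'I_n}).

Definition fcomp g (r : {ffun 'I_n -> 'I_n}) : PF n k :=
  [ffun a : tup n k => g [ffun l => a (r l)]].

Definition tau (i j : 'I_n) : {ffun 'I_n -> 'I_n} :=
  [ffun l => if l == i then j else l].

Lemma subst_comp g i j : subst_var g i j = fcomp g (tau i j).
Proof.
apply/ffunP => a; rewrite !ffunE; congr (g _); apply/ffunP => l.
by rewrite !ffunE; case: ifP.
Qed.

Lemma comp_comp g r1 r2 : fcomp (fcomp g r1) r2 = fcomp g [ffun l => r2 (r1 l)].
Proof.
apply/ffunP => a; rewrite !ffunE; congr (g _); apply/ffunP => l.
by rewrite !ffunE.
Qed.


Lemma rhd_comp f g h : rhd g h -> (exists r, g = fcomp f r) -> exists r', h = fcomp f r'.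
Proof.
move=> /existsP[i /existsP[j /and4P[_ _ _ /eqP ->]]] [r ->].
by rewrite subst_comp comp_comp; eexists.
Qed.

Lemma minor_comp f h : h \in Mnr f -> exists r, h = fcomp f r.
Proof.
rewrite inE => /existsP[g /andP[fg /connectP[p pth ->]]].
have : exists r, g = fcomp f r.
  apply: (rhd_comp fg); exists [ffun l => l]; apply/ffunP => a.
  rewrite [RHS]ffunE; congr (f _); apply/ffunP => l; by rewrite !ffunE.
elim: p g {fg} pth => [|x p IH] g //= /andP[gx px] Hg.
by apply: IH px _; apply: rhd_comp gx Hg.
Qed.

Definition canon (r : {ffun 'I_n -> 'I_n}) : {ffun 'I_n -> 'I_n} :=
  [ffun l : 'I_n => [arg min_(m < l | r m == r l) (nat_of_ord m)]].

Lemma canon1 r l : r (canon r l) = r l.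
Proof. by rewrite ffunE; case: arg_minnP => // m /eqP. Qed.

Lemma canon2 r l : canon r l <= l.
Proof. by rewrite ffunE; case: arg_minnP => // m _ /(_ l (eqxx _)). Qed.

Lemma canon3 r l1 l2 : r l1 = r l2 -> canon r l1 = canon r l2.
Proof.
move=> e; have c1 := canon1 r l1; have c2 := canon1 r l2.
move: c1 c2; rewrite /canon !ffunE.
case: arg_minnP => // m1 _ H1; case: arg_minnP => // m2 _ H2 c1 c2.
apply: val_inj; apply/eqP; rewrite eqn_leq; apply/andP; split.
  by apply: H1; rewrite c2 e.
by apply: H2; rewrite c1 e.
Qed.

Lemma canon_perm r : exists s : {perm 'I_n}, forall l, r l = s (canon r l).
Proof.
have inj : {in [set canon r l | l : 'I_n] &, injective r}.
  move=> x y /imsetP[l1 _ ->] /imsetP[l2 _ ->]; rewrite !canon1 => e.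
  by rewrite (canon3 e).
have [s Hs] := @ext_perm _ r _ [set canon r l | l : 'I_n] (erefl _) inj.
exists s => l; rewrite Hs ?canon1 //; exact: imset_f.
Qed.

Lemma equivb_comp f r h' : equivb (fcomp f r) h' =
  [exists s : {perm 'I_n}, h' == fcomp f [ffun l => s (r l)]].
Proof.
apply/existsP/existsP => -[s Hs]; exists s.
  apply/eqP/ffunP => a; move/forallP: Hs => /(_ a) /eqP ->.
  by rewrite !ffunE; congr (f _); apply/ffunP => l; rewrite !ffunE.
apply/forallP => a; move/eqP: Hs => ->.
by rewrite !ffunE; apply/eqP; congr (f _); apply/ffunP => l; rewrite !ffunE.
Qed.

End Mnr.

Lemma card_le_pred n (l : 'I_n) : #|[pred m : 'I_n | m <= l]| <= l.+1.
Proof.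
rewrite cardE -(size_map val) -(size_iota 0 l.+1).
apply: uniq_leq_size; first by rewrite (map_inj_uniq val_inj) enum_uniq.
move=> x /mapP[m]; rewrite mem_enum inE => ml ->.
by rewrite mem_iota add0n ltnS.
Qed.

Lemma prod_fact n : \prod_(l < n) l.+1 = n`!.
Proof.
elim: n => [|n IH]; first by rewrite big_ord0.
by rewrite big_ord_recr /= IH factS mulnC.
Qed.

Lemma cardF n : #|[set c : {ffun 'I_n -> 'I_n} | [forall l, c l <= l]]| <= n`!.
Proof.
rewrite (@eq_card _ _ (family (fun l : 'I_n => [pred m : 'I_n | m <= l]))); last first.
  by move=> c; rewrite inE; apply/forallP/familyP => H x; have := H x.
rewrite card_family foldrE.
rewrite big_image /= -prod_fact.
rewrite (eq_bigl xpredT) //.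
by apply: leq_prod => l _; apply: card_le_pred.
Qed.

Lemma mnr_le n k (f : PF n k) : mnr f <= n`!.
Proof.
set F := [set c : {ffun 'I_n -> 'I_n} | [forall l, c l <= l]].
pose Phi := fun c : {ffun 'I_n -> 'I_n} =>
  [set h' in Mnr f | [exists s : {perm 'I_n}, h' == fcomp f [ffun l => s (c l)]]].
have sub : [set [set h' in Mnr f | equivb h h'] | h in Mnr f] \subset Phi @: F.
  apply/subsetP => C /imsetP[h hM ->].
  have [r hr] := minor_comp hM; rewrite hr.
  have [s0 Hs0] := canon_perm r.
  apply/imsetP; exists (canon r).
    by rewrite inE; apply/forallP => l; exact: canon2.
  apply/setP => h'; rewrite !inE; congr (_ && _).
  rewrite equivb_comp.
  apply/existsP/existsP => -[s /eqP ->].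
    exists (s0 * s)%g; apply/eqP; congr (fcomp f _); apply/ffunP => l.
    by rewrite [LHS]ffunE [RHS]ffunE permM -Hs0.
  exists (s0^-1 * s)%g; apply/eqP; congr (fcomp f _); apply/ffunP => l.
  by rewrite [LHS]ffunE [RHS]ffunE permM Hs0 permK.
rewrite /mnr; apply: leq_trans (subset_leq_card sub) _.
apply: leq_trans (leq_imset_card _ _) _; exact: cardF.
Qed.

Lemma mnr_ge1 n k (f : PF n k) : 1 < ess f -> 1 <= mnr f.
Proof.
move=> /card_gt1P[i [j [iE jE ij]]].
have hM : subst_var f i j \in Mnr f.
  rewrite inE; apply/existsP; exists (subst_var f i j); rewrite connect0 andbT.
  by apply/existsP; exists i; apply/existsP; exists j; rewrite ij iE jE eqxx.
apply/card_gt0P; exists [set h' in Mnr f | equivb (subst_var f i j) h'].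
exact: imset_f.
Qed.

Lemma pow2_fact m : 2 ^ m <= m.+1`!.
Proof.
elim: m => [|m IH] //.
rewrite expnS factS; apply: leq_mul => //.
Qed.

Lemma cmr_rec_two n k m (g : PF n k) : ess g = 2 -> cmr_rec m g = 2.
Proof. by move=> h; case: m => [|m] /=; rewrite h. Qed.

Theorem theorem14 (n k : nat) (f : PF n k) :
  2 <= n -> n <= k -> ess f = n ->
  (n * (n - 1) <= 2 * cmr f /\ cmr f * 2 ^ (n - 2) <= n`! * (n - 1)`!) /\
  (1 <= mnr f /\ mnr f * 2 ^ (n - 2) <= n`! * (n - 1)`!).
Proof.
move=> n2 nk ef.
have E2 : 1 < ess f by rewrite ef.
have p2 : n`! * 2 ^ (n - 2) <= n`! * (n - 1)`!.
  rewrite leq_mul2l; apply/orP; right.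
  have -> : n - 1 = (n - 2).+1 by lia.
  exact: pow2_fact.
split; last first.
  split; first exact: mnr_ge1.
  apply: leq_trans p2; rewrite leq_mul2r; apply/orP; right; exact: mnr_le.
split.
  case: (eqVneq n 2) => [e2|ne2].
    rewrite /cmr cmr_rec_two ?ef //.
    by have -> : n * (n - 1) = 2 by rewrite e2.
  have -> : cmr f = cmr_rec n.-1.+1 f by rewrite prednK //; lia.
  rewrite cmr_recS; last by rewrite ef; lia.
  have := pairs_count (Ess f); rewrite -/(ess f) ef => <-.
  rewrite mulnC leq_mul2l; apply/orP; right.
  by apply: leq_sum => i _; apply: leq_sum => j _; apply: cmr_rec_ge1.
rewrite -(U_val n2) leq_mul2r; apply/orP; right.
by have := cmr_rec_le n f; rewrite ef.
Qed.
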